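(* Let $\pi=(\pi_n^{n+1}\colon X_{n+1}\to X_n)_{n\ge1}$ be an inverse sequence of continuous maps between compact metric spaces. Then the following are equivalent: (1) $\pi$ satisfies MLC(1); (2) for any $n\ge1$ and $m\ge n+1$, $\pi_n^{n+1}(X_{n+1})=\pi_n^m(X_m)$; (3) for every $n\ge1$, $\hat{X}_n=\pi_n^{n+1}(X_{n+1})$.
   Context: For $m\ge n\ge1$, $\pi_n^m\colon X_m\to X_n$ is the identity if $m=n$ and $\pi_n^{n+1}\circ\pi_{n+1}^{n+2}\circ\cdots\circ\pi_{m-1}^m$ if $m>n$. $\hat{X}_n=\bigcap_{m\ge n}\pi_n^m(X_m)$. $\pi$ satisfies MLC(1) if $\pi_n^{n+1}(X_{n+1})=\pi_n^{n+2}(X_{n+2})$ for every $n\ge1$. *)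

(* Defs.v *)
From HB Require Import structures.
From mathcomp Require Import all_boot all_order all_algebra.
From mathcomp Require Import all_classical all_reals all_analysis.
Unset Printing Implicit Defensive.
Local Open Scope classical_set_scope.

(* Inverse sequence, 0-indexed: p n : X (n.+1) -> X n  (paper's index n+1). *)

Fixpoint pi_comp {T : nat -> Type} (p : forall n, T n.+1 -> T n) (n k : nat)
  : T (k + n)%N -> T n :=
  match k return T (k + n)%N -> T n with
  | 0 => fun x => x
  | k'.+1 => fun x => @pi_comp T p n k' (p (k' + n)%N x)
  end.

Definition image_at {T : nat -> Type} (p : forall n, T n.+1 -> T n) (n k : nat)
  : set (T n) := range (@pi_comp T p n k).

Definition Xhat {T : nat -> Type} (p : forall n, T n.+1 -> T n) (n : nat)
  : set (T n) := \bigcap_(k in [set: nat]) image_at p n k.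

Definition MLC1 {T : nat -> Type} (p : forall n, T n.+1 -> T n) : Prop :=
  forall n, image_at p n 1 = image_at p n 2.

(* Main.v *)
Require Import Defs.
From HB Require Import structures.
From mathcomp Require Import all_boot all_order all_algebra.
From mathcomp Require Import all_classical all_reals all_analysis.
Local Open Scope classical_set_scope.


Lemma img_succ {T : nat -> Type} (p : forall n, T n.+1 -> T n) n k :
  image_at p n k.+1 = pi_comp p n k @` image_at p (k + n) 1.
Proof.
rewrite /image_at; apply/seteqP; split => x.
  by case=> y _ <-; exists (p (k + n)%N y) => //; exists y.
by case=> y [z _ <-] <-; exists z.
Qed.

Lemma img_succ2 {T : nat -> Type} (p : forall n, T n.+1 -> T n) n k :
  image_at p n k.+2 = pi_comp p n k @` image_at p (k + n) 2.
Proof.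
rewrite /image_at; apply/seteqP; split => x.
  by case=> y _ <-; exists (p (k + n)%N (p (k.+1 + n)%N y)) => //; exists y.
by case=> y [z _ <-] <-; exists z.
Qed.

Lemma img_mono {T : nat -> Type} (p : forall n, T n.+1 -> T n) n k :
  image_at p n k.+1 `<=` image_at p n k.
Proof. by move=> x [y _ <-]; exists (p (k + n)%N y). Qed.

Theorem lemma2p1 (R : realType) (X : nat -> metricType R)
  (p : forall n, X n.+1 -> X n)
  (hcpt : forall n, compact [set: X n])
  (hcont : forall n, continuous (p n)) :
  [/\ (MLC1 p -> forall n k, (1 <= k)%N -> image_at p n 1 = image_at p n k),
      ((forall n k, (1 <= k)%N -> image_at p n 1 = image_at p n k) ->
         forall n, Xhat p n = image_at p n 1)
    & ((forall n, Xhat p n = image_at p n 1) -> MLC1 p)].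
Proof.
split.
- move=> H n k; case: k => // k _.
  elim: k => // k IH.
  by rewrite IH img_succ2 img_succ H.
- move=> H n; apply/seteqP; split.
    by move=> x Hx; apply: Hx.
  move=> x Hx k _; case: k => [|k].
    by exists x.
  by rewrite -H.
- move=> H n; apply/seteqP; split.
    by rewrite -H => x Hx; apply: Hx.
  exact: img_mono.
Qed.
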